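(* (a) There is a unique action of the symmetric group $S_n$ on $\mathcal{X}$ by $\mathbf{k}$-algebra automorphisms such that $\sigma\cdot x_{i,j}=x_{\sigma(i),\sigma(j)}$ for all $\sigma\in S_n$ and all pairs $(i,j)$ of distinct elements of $[n]$. (b) The ideal $\mathcal{J}$ is invariant under this action, so the quotient $\mathbf{k}$-algebra $\mathcal{X}/\mathcal{J}$ inherits an action of $S_n$ by $\mathbf{k}$-algebra automorphisms.
   Context: Let $\mathbf{k}$ be a commutative ring, let $\beta,\alpha\in\mathbf{k}$, and let $n$ be a positive integer; $[n]=\{1,\dots,n\}$. Let $\mathcal{X}=\mathbf{k}[x_{i,j}\mid 1\le i<j\le n]$ be the polynomial ring in the indeterminates $x_{i,j}$, and $\mathcal{J}$ the ideal generated by all $x_{i,j}x_{j,k}-x_{i,k}(x_{i,j}+x_{j,k}+\beta)-\alpha$ for $1\le i<j<k\le n$. For $(i,j)\in[n]^2$ with $i>j$, define the element $x_{i,j}\in\mathcal{X}$ by $x_{i,j}=-\beta-x_{j,i}$ (so $x_{i,j}$ is defined for all pairs of distinct $i,j\in[n]$). $S_n$ is the group of permutations of $[n]$. *)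

(* Defs.v *)
From HB Require Import structures.
From mathcomp Require Import all_boot all_order all_algebra all_fingroup.
Set Implicit Arguments. Unset Strict Implicit. Unset Printing Implicit Defensive.
Import GRing.Theory.
Local Open Scope ring_scope.

(* Multivariate polynomial ring R[X_0, ..., X_(m-1)] built as the iterated
   univariate polynomial ring  R[X_0][X_1]...[X_(m-1)]. *)
Fixpoint mpoly (R : comNzRingType) (m : nat) : comNzRingType :=
  if m is m'.+1 then {poly (mpoly R m')} else R.

Fixpoint mconst (R : comNzRingType) (m : nat) : R -> mpoly R m :=
  match m return R -> mpoly R m with
  | 0 => fun c => c
  | m'.+1 => fun c => (mconst m' c)%:P
  end.

(* The indeterminate X_t (t < m); junk value 0 when t >= m. *)
Fixpoint mvar (R : comNzRingType) (m : nat) (t : nat) : mpoly R m :=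
  match m return mpoly R m with
  | 0 => 0
  | m'.+1 => if t == m' then 'X else (mvar R m' t)%:P
  end.

Definition polyV (R : comNzRingType) (V : finType) : comNzRingType :=
  mpoly R #|V|.
Definition polyV_const (R : comNzRingType) (V : finType) (c : R) : polyV R V :=
  mconst #|V| c.
Definition polyV_var (R : comNzRingType) (V : finType) (v : V) : polyV R V :=
  mvar R #|V| (enum_rank v).

Definition upair (n : nat) := {p : 'I_n * 'I_n | (p.1 < p.2)%N}.

Definition Xring (k : comNzRingType) (n : nat) : comNzRingType :=
  polyV k (upair n).

Definition Xconst (k : comNzRingType) (n : nat) (c : k) : Xring k n :=
  polyV_const (upair n) c.

(* The indeterminate x_{i,j} for i < j (junk value 0 if not i < j). *)
Definition xvar (k : comNzRingType) (n : nat) (i j : 'I_n) : Xring k n :=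
  if @insub _ (fun p : 'I_n * 'I_n => (p.1 < p.2)%N) (upair n) (i, j) is Some p
  then @polyV_var k (upair n) p else 0.

(* x_{i,j} for all i,j : 'I_n ; for i > j it is -beta - x_{j,i};
   for i = j it is a junk value 0 (never used). *)
Definition xx (k : comNzRingType) (n : nat) (beta : k) (i j : 'I_n) : Xring k n :=
  if (i < j)%N then xvar k i j
  else if (j < i)%N then - Xconst n beta - xvar k j i
  else 0.

Definition Jgen (k : comNzRingType) (n : nat) (beta alpha : k)
  (i j l : 'I_n) : Xring k n :=
  xx beta i j * xx beta j l
  - xx beta i l * (xx beta i j + xx beta j l + Xconst n beta) - Xconst n alpha.

Definition inJ (k : comNzRingType) (n : nat) (beta alpha : k) (p : Xring k n) : Prop :=
  exists c : 'I_n -> 'I_n -> 'I_n -> Xring k n,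
    p = \sum_(i < n) \sum_(j < n) \sum_(l < n)
          (if (i < j)%N && (j < l)%N then c i j l * Jgen beta alpha i j l else 0).

(* f is a k-algebra endomorphism of X (k-linear unital ring morphism;
   k-linearity of a ring morphism = fixing the constants). *)
Definition kalg_endo (k : comNzRingType) (n : nat) (f : Xring k n -> Xring k n) : Prop :=
  [/\ forall a b, f (a + b) = f a + f b,
      forall a b, f (a * b) = f a * f b,
      f 1 = 1 &
      forall c : k, f (Xconst n c) = Xconst n c].

(* act is an action of S_n on X by k-algebra automorphisms.  Note that in
   MathComp (s * t) x = t (s x), i.e. s * t is "t after s". *)
Definition is_Sn_kalg_action (k : comNzRingType) (n : nat)
  (act : {perm 'I_n} -> Xring k n -> Xring k n) : Prop :=
  [/\ forall s, kalg_endo (act s),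
      forall s, bijective (act s),
      forall p, act 1%g p = p &
      forall s t p, act (s * t)%g p = act t (act s p)].

(* Main.v *)
Require Import Defs.
From HB Require Import structures.
From mathcomp Require Import all_boot all_order all_algebra all_fingroup.
From mathcomp Require Import ring.
Import GRing.Theory.
Set Implicit Arguments. Unset Strict Implicit.
Local Open Scope ring_scope.

Section M.
Variable R : comNzRingType.

Fixpoint mconstR (m : nat) : {rmorphism R -> mpoly R m} :=
  match m return {rmorphism R -> mpoly R m} with
  | 0 => idfun
  | m'.+1 => (polyC : {rmorphism mpoly R m' -> {poly mpoly R m'}}) \o mconstR m'
  end.

Lemma mconstRE m c : mconstR m c = mconst m c.
Proof. by elim: m => //= m IH; rewrite IH. Qed.

Variable S : comNzRingType.
Variable f : {rmorphism R -> S}.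
Variable v : nat -> S.

Fixpoint meval (m : nat) : {rmorphism mpoly R m -> S} :=
  match m return {rmorphism mpoly R m -> S} with
  | 0 => f
  | m'.+1 => (horner_eval (v m') : {rmorphism {poly S} -> S}) \o (map_poly (meval m') : {rmorphism {poly mpoly R m'} -> {poly S}})
  end.

Lemma meval_const m c : meval m (mconst m c) = f c.
Proof. elim: m => //= m IH. rewrite /= horner_evalE map_polyC hornerC; exact: IH. Qed.

Lemma meval_var m t : (t < m)%N -> meval m (mvar R m t) = v t.
Proof.
elim: m => //= m IH; rewrite ltnS leq_eqVlt => /orP[/eqP->|lt].
  by rewrite horner_evalE eqxx map_polyX hornerX.
rewrite horner_evalE (ltn_eqF lt) map_polyC hornerC; exact: IH.
Qed.
End M.

Lemma mpoly_uniq (R S : comNzRingType) m (g h : {rmorphism mpoly R m -> S}) :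
  (forall c, g (mconst m c) = h (mconst m c)) ->
  (forall t, (t < m)%N -> g (mvar R m t) = h (mvar R m t)) ->
  forall p, g p = h p.
Proof.
elim: m g h => [|m IH] g h hc hv p; first exact: (hc p).
have e : forall q : mpoly R m, g q%:P = h q%:P.
  apply: (IH (g \o polyC) (h \o polyC)) => [c|t lt] /=; first exact: hc.
  have := hv t (ltnW lt) => /=; by rewrite (ltn_eqF lt).
have eX : g 'X = h 'X by have := hv m (ltnSn m) => /=; rewrite eqxx.
rewrite -[p](coefK (p : {poly mpoly R m})) poly_def !rmorph_sum /=; apply: eq_bigr => i _.
by rewrite -mul_polyC !rmorphM !rmorphXn /= e eX.
Qed.


Definition UPf (n : nat) : finType := upair n.

Section X.
Variables (k : comNzRingType) (beta alpha : k) (n : nat).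
Local Notation M := #|UPf n|.
Local Notation XR := (Xring k n).
Local Notation IJ := (@inJ k n beta alpha).

Definition vals (s : {perm 'I_n}) (t : nat) : XR :=
  if (insub t : option 'I_M) is Some o then
    let p := val (enum_val o) in xx beta (s p.1) (s p.2) else 0.

Definition act (s : {perm 'I_n}) : {rmorphism XR -> XR} :=
  @meval k XR (mconstR k M) (vals s) M.

Lemma xx_var (p : UPf n) : xx beta (val p).1 (val p).2 = mvar k M (enum_rank p).
Proof.
rewrite /xx (valP p) /xvar -surjective_pairing valK //.
Qed.

Lemma act_const s c : act s (Xconst n c) = Xconst n c.
Proof. rewrite /act meval_const mconstRE //. Qed.

Lemma act_var s (p : UPf n) :
  act s (mvar k M (enum_rank p)) = xx beta (s (val p).1) (s (val p).2).
Proof. rewrite /act meval_var ?ltn_ord // /vals valK enum_rankK //. Qed.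

Lemma xx_swap (i j : 'I_n) : i != j -> xx beta j i = - Xconst n beta - xx beta i j.
Proof.
move=> ne; rewrite /xx; case: (ltngtP i j) => h.
- by [].
- ring.
- by move: ne; rewrite (val_inj h) eqxx.
Qed.

Lemma act_xx s (i j : 'I_n) : i != j -> act s (xx beta i j) = xx beta (s i) (s j).
Proof.
have lt : forall i j : 'I_n, (i < j)%N -> act s (xx beta i j) = xx beta (s i) (s j).
  move=> a b h; pose p : UPf n := exist _ (a, b) h.
  by have := xx_var p; rewrite /= => ->; rewrite act_var.
move=> ne; case: (ltngtP i j) => h; first exact: lt.
- have ne' : j != i by rewrite eq_sym.
  rewrite (xx_swap ne') rmorphB rmorphN act_const lt // xx_swap; first ring.
  by rewrite (inj_eq perm_inj).
- by move: ne; rewrite (val_inj h) eqxx.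
Qed.

Lemma act_uniq (g h : {rmorphism XR -> XR}) :
  (forall c, g (Xconst n c) = h (Xconst n c)) ->
  (forall i j : 'I_n, (i < j)%N -> g (xx beta i j) = h (xx beta i j)) ->
  forall p, g p = h p.
Proof.
move=> hc hv; apply: (@mpoly_uniq k XR M g h) => [c|t lt]; first exact: hc.
pose o : 'I_M := Ordinal lt.
have -> : t = enum_rank (enum_val o) by rewrite enum_valK.
rewrite -xx_var; apply: hv; exact: (valP (enum_val o)).
Qed.

Lemma inJ0 : IJ 0.
Proof.
exists (fun _ _ _ => 0); rewrite big1 // => i _; rewrite big1 // => j _.
by rewrite big1 // => l _; rewrite mul0r if_same.
Qed.

Lemma inJD p q : IJ p -> IJ q -> IJ (p + q).
Proof.
move=> [c1 ->] [c2 ->]; exists (fun i j l => c1 i j l + c2 i j l).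
rewrite -big_split; apply: eq_bigr => i _; rewrite -big_split; apply: eq_bigr => j _.
rewrite -big_split; apply: eq_bigr => l _; case: (_ && _); [exact: (esym (mulrDl _ _ _)) | exact: addr0].
Qed.

Lemma inJM q p : IJ p -> IJ (q * p).
Proof.
move=> [c ->]; exists (fun i j l => q * c i j l).
rewrite mulr_sumr; apply: eq_bigr => i _; rewrite mulr_sumr; apply: eq_bigr => j _.
rewrite mulr_sumr; apply: eq_bigr => l _; case: ifP => _; by rewrite ?mulrA ?mulr0.
Qed.

Lemma inJ_gen (i j l : 'I_n) : (i < j)%N -> (j < l)%N -> IJ (Jgen beta alpha i j l).
Proof.
move=> hij hjl.
exists (fun a b d => if (a == i) && (b == j) && (d == l) then 1 else 0).
rewrite (bigD1 i) //= (bigD1 j) //= (bigD1 l) //= !eqxx hij hjl mul1r.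
rewrite big1 ?addr0; last by move=> d /negbTE ->; rewrite andbF mul0r if_same.
rewrite big1 ?addr0; last first.
  by move=> b /negbTE hb; rewrite big1 // => d _; rewrite hb andbF /= mul0r if_same.
rewrite big1 ?addr0 //.
by move=> a /negbTE ha; rewrite big1 // => b _; rewrite big1 // => d _; rewrite ha /= mul0r if_same.
Qed.

Lemma Jswap1 (a b c : 'I_n) : a != b -> Jgen beta alpha a b c = Jgen beta alpha b a c.
Proof. move=> ne; rewrite /Jgen (xx_swap ne); ring. Qed.

Lemma Jswap2 (a b c : 'I_n) : b != c -> Jgen beta alpha a b c = Jgen beta alpha a c b.
Proof. move=> ne; rewrite /Jgen (xx_swap ne); ring. Qed.

Lemma ord_neq (a b : 'I_n) : (a < b)%N -> a != b.
Proof. by move=> h; apply/eqP => e; move: h; rewrite e ltnn. Qed.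

Lemma inJ_distinct (a b c : 'I_n) : a != b -> b != c -> a != c ->
  IJ (Jgen beta alpha a b c).
Proof.
have L1 : forall a b c : 'I_n, (a < b)%N -> b != c -> a != c ->
    IJ (Jgen beta alpha a b c).
  move=> x y z hxy nyz nxz; case: (ltngtP y z) => hyz.
  - exact: inJ_gen.
  - rewrite Jswap2 //; case: (ltngtP x z) => hxz.
    + exact: inJ_gen.
    + rewrite (Jswap1 _ nxz); exact: inJ_gen.
    + by move: nxz; rewrite (val_inj hxz) eqxx.
  - by move: nyz; rewrite (val_inj hyz) eqxx.
move=> nab nbc nac; case: (ltngtP a b) => h.
- exact: L1.
- rewrite Jswap1 //; apply: L1 => //; by rewrite eq_sym.
- by move: nab; rewrite (val_inj h) eqxx.
Qed.

Lemma act_Jgen s (i j l : 'I_n) : i != j -> j != l -> i != l ->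
  act s (Jgen beta alpha i j l) = Jgen beta alpha (s i) (s j) (s l).
Proof.
move=> h1 h2 h3; rewrite /Jgen !rmorphB !rmorphM !rmorphD !act_const !act_xx //.
Qed.

Lemma act_inJ s p : IJ p -> IJ (act s p).
Proof.
move=> [c ->]; rewrite !rmorph_sum /=.
apply: (big_ind (IJ)) => [|x y|i _]; [exact: inJ0|exact: inJD|].
rewrite !rmorph_sum /=.
apply: (big_ind (IJ)) => [|x y|j _]; [exact: inJ0|exact: inJD|].
rewrite !rmorph_sum /=.
apply: (big_ind (IJ)) => [|x y|l _]; [exact: inJ0|exact: inJD|].
case: ifP => [/andP[h1 h2]|_]; last by rewrite rmorph0; exact: inJ0.
rewrite rmorphM act_Jgen ?ord_neq //; last exact: ltn_trans h2.
apply: inJM; apply: inJ_distinct; rewrite (inj_eq perm_inj) ord_neq //.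
exact: ltn_trans h2.
Qed.

End X.

Theorem proposition3p21 (k : comNzRingType) (beta alpha : k) (n : nat) (hn : (0 < n)%N) :
  exists act : {perm 'I_n} -> Xring k n -> Xring k n,
    [/\ (* (a) existence *)
        is_Sn_kalg_action act,
        (forall (s : {perm 'I_n}) (i j : 'I_n), i != j ->
           act s (xx beta i j) = xx beta (s i) (s j)),
        (* (a) uniqueness *)
        (forall act' : {perm 'I_n} -> Xring k n -> Xring k n,
           is_Sn_kalg_action act' ->
           (forall (s : {perm 'I_n}) (i j : 'I_n), i != j ->
              act' s (xx beta i j) = xx beta (s i) (s j)) ->
           forall s p, act' s p = act s p),
        (* (b) J is invariant *)
        (forall s p, inJ beta alpha p -> inJ beta alpha (act s p)) &
        (* (b) hence the action descends to X / J (compatible with congruence mod J) *)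
        (forall s p q, inJ beta alpha (p - q) -> inJ beta alpha (act s p - act s q))].
Proof.
pose A s (p : Xring k n) := act beta s p.
have A1 : forall p, A 1%g p = p.
  move=> p; apply: (@act_uniq k beta n (act beta 1%g) idfun) => [c|i j h] /=.
    exact: act_const.
  by rewrite act_xx ?ord_neq // !perm1.
have AM : forall s t p, A (s * t)%g p = A t (A s p).
  move=> s t p; apply: (@act_uniq k beta n (act beta (s * t)%g) (act beta t \o act beta s)) => [c|i j h] /=.
    by rewrite !act_const.
  have ne := ord_neq h.
  have ne' : s i != s j by rewrite (inj_eq perm_inj).
  by rewrite (act_xx _ _ ne) (act_xx _ _ ne) (act_xx _ _ ne') !permM.
exists A; split.
- split.
  + move=> s; split => [a b|a b||c]; rewrite /A ?rmorphD ?rmorphM ?rmorph1 //.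
    exact: act_const.
  + move=> s; exists (A s^-1)%g => p; by rewrite -AM ?mulgV ?mulVg A1.
  + exact: A1.
  + exact: AM.
- move=> s i j ne; exact: act_xx.
- move=> act' [Hend _ _ _] Hx s p.
  have [fD fM f1 fc] := Hend s.
  have f0 : act' s 0 = 0.
    have h := fD 0 0; rewrite addr0 in h.
    by apply: (addrI (act' s 0)); rewrite addr0 -h.
  pose g : {rmorphism Xring k n -> Xring k n} :=
    HB.pack (act' s) (GRing.isNmodMorphism.Build _ _ (act' s) (f0, fD))
      (GRing.isMonoidMorphism.Build _ _ (act' s) (f1, fM)).
  apply: (@act_uniq k beta n g (act beta s)) => [c|i j h] /=.
    by rewrite fc act_const.
  by rewrite Hx ?ord_neq // act_xx ?ord_neq.
- move=> s p; exact: act_inJ.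
- move=> s p q h; rewrite /A -rmorphB; exact: act_inJ.
Qed.
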